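(* For every object $(G,\hat q,f)$ of $\mathsf{PSM}$, the kernel of the group homomorphism $F:\mathrm{Aut}_{\mathsf{PSM}}(G,\hat q,f)\to\mathrm{Aut}_{\mathsf{ASCS}}(F(G,\hat q,f))$ is isomorphic to $\mathbb{Z}_2$.
   Context: A quadratic form on a finite abelian group $G$ is a map $q:G\to\mathbb{Q}/\mathbb{Z}$ such that $b(x,y):=q(x+y)-q(x)-q(y)+q(0)$ is bilinear; non-degenerate if $b$ is; homogeneous if $q(nx)=n^2q(x)$ for $n\in\mathbb{Z}$. $q\sim q'$ if there is $\Delta\in G$ with $q(g)=q'(g-\Delta)$ for all $g$; $[q]$ is the class. Gauss sum: $\tau^+(G,q)=|G|^{-1/2}\sum_{g\in G}e^{2\pi i q(g)}$. $\mathsf{ASCS}$: objects $(\mathscr{D},[q],\sigma)$ with $\mathscr{D}$ finite abelian, $[q]$ a class of non-degenerate quadratic forms on $\mathscr{D}$ with no representative satisfying $q(0)=0$, $\sigma\in\mathbb{Z}_8$, and $\tau^+(\mathscr{D},q)=e^{2\pi i\sigma/8}$; morphisms are group isomorphisms $\phi$ with $[q_2\circ\phi]=[q_1]$. $\mathsf{PSM}$: objects $(G,\hat q,f)$ with $G$ finite abelian, $\hat q$ a non-degenerate homogeneous quadratic form, $f\in G$ with $2f=0$, $\hat q(f)=\tfrac12$; morphisms are group isomorphisms $\phi$ with $\hat q_2\circ\phi=\hat q_1$, $\phi(f_1)=f_2$. Functor $F$: for $(G,\hat q,f)$ with bilinear form $\hat b$, $G_0=\{g:\hat b(g,f)=0\}$,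 $\mathscr{D}=G_0/\langle f\rangle$, $a\in G\setminus G_0$, $q_a([x])=\hat q(x-a)$ for $x\in G_0$, $\sigma\in\mathbb{Z}_8$ with $\tau^+(G,\hat q)=e^{2\pi i\sigma/8}$; $F(G,\hat q,f)=(\mathscr{D},[q_a],\sigma)$ and $F(\phi)$ is the isomorphism induced on $G_0/\langle f\rangle$. *)

(* Defs.v *)
From HB Require Import structures.
From mathcomp Require Import all_boot all_order all_algebra all_fingroup.
From mathcomp Require Import boolp.
Set Implicit Arguments. Unset Strict Implicit. Unset Printing Implicit Defensive.
Import Order.TTheory GRing.Theory Num.Theory.
Local Open Scope ring_scope.

(* Q/Z is modelled by rat modulo the integers: a quadratic form G -> Q/Z is
   represented by any lift q : G -> rat, and all equalities in Q/Z are
   equalities modulo Z. *)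
Definition eqQZ (a b : rat) : bool := (a - b) \is a Num.int.

Section PSM.
Variable G : finZmodType.
Implicit Types (q : G -> rat) (f x y z : G).

Definition bil q x y : rat := q (x + y) - q x - q y + q 0.

Definition is_quadratic_form q : Prop :=
  (forall x y z, eqQZ (bil q (x + y) z) (bil q x z + bil q y z)) /\
  (forall x y z, eqQZ (bil q x (y + z)) (bil q x y + bil q x z)).

Definition nondegenerate q : Prop :=
  forall x, (forall y, eqQZ (bil q x y) 0) -> x = 0.

Definition homogeneous q : Prop :=
  forall (n : int) x, eqQZ (q (x *~ n)) ((n ^+ 2)%:~R * q x).

Definition PSM_object q f : Prop :=
  [/\ is_quadratic_form q, nondegenerate q, homogeneous q,
      f *+ 2 = 0 & eqQZ (q f) (1 / 2)].

Definition PSM_aut q f (phi : {perm G}) : Prop :=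
  [/\ (forall x y, phi (x + y) = phi x + phi y),
      (forall x, eqQZ (q (phi x)) (q x)) & phi f = f].

Definition G0 q f (x : G) : Prop := eqQZ (bil q x f) 0.

(* F(phi) is the identity of D = G_0 / <f>: phi(x) is in x + <f> for x in G_0 *)
Definition F_is_id q f (phi : {perm G}) : Prop :=
  forall x, G0 q f x -> exists n : int, phi x - x = f *~ n.

Definition kerF q f : {set {perm G}} :=
  [set phi : {perm G} | `[< PSM_aut q f phi /\ F_is_id q f phi >]].

End PSM.

(* Main.v *)
Require Import Defs.
From HB Require Import structures.
From mathcomp Require Import all_boot all_order all_algebra all_fingroup.
From mathcomp Require Import boolp.
From mathcomp Require Import all_solvable ring zify.
Import GRing.Theory Num.Theory.
Local Open Scope ring_scope.

Notation Zi x := (x \is a Num.int).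

Ltac zi := repeat first [done | apply: rpred1 | apply: rpredD | rewrite rpredN | apply: rpredMn].

Lemma nhalf : ~ Zi (1/2 : rat).
Proof. by rewrite Qint_def. Qed.

Lemma half_int (r : rat) : Zi (r *+ 2) -> Zi r \/ Zi (r - 1/2).
Proof.
move/intrP=> [m hm].
have hr : r = (r *+ 2) / 2 by rewrite mulr2n; field.
have [h|h] : (m %% 2 = 0 \/ m %% 2 = 1)%Z by lia.
- left; apply/intrP; exists (m %/ 2)%Z.
  by rewrite hr hm {1}(divz_eq m 2) h addr0 intrM /=; field.
- right; apply/intrP; exists (m %/ 2)%Z.
  by rewrite hr hm {1}(divz_eq m 2) h intrD intrM /=; field.
Qed.

Lemma qadd (G : finZmodType) (q : G -> rat) x y :
  q (x + y) = q x + q y + bil q x y - q 0.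
Proof. rewrite /bil; ring. Qed.

Lemma Bsym (G : finZmodType) (q : G -> rat) x y : bil q x y = bil q y x.
Proof. rewrite /bil (addrC y x); ring. Qed.

Lemma B0 (G : finZmodType) (q : G -> rat) x : bil q x 0 = 0.
Proof. rewrite /bil addr0; ring. Qed.

Lemma fnat (G : finZmodType) (f : G) m : f + f = 0 ->
  f *+ m = if odd m then f else 0.
Proof.
move=> hf; elim: m => [|m IH]; first by rewrite mulr0n.
by rewrite mulrS IH /=; case: (odd m); rewrite ?addr0.
Qed.

Lemma fint (G : finZmodType) (f : G) n : f + f = 0 ->
  f *~ n = 0 \/ f *~ n = f.
Proof.
move=> hf.
have hN : - f = f by rewrite -[LHS]add0r -hf addrK.
case: n => m.
- by rewrite -pmulrn (@fnat _ f _ hf); case: (odd m); [right|left].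
- rewrite NegzE mulrNz -pmulrn (@fnat _ f _ hf); case: (odd m.+1); [right|left] => //.
  by rewrite oppr0.
Qed.

Section Main.
Variable G : finZmodType.
Variables (q : G -> rat) (f : G).
Hypothesis hP : PSM_object q f.

Local Notation B := (bil q).

Lemma HL x y z : Zi (B (x + y) z - (B x z + B y z)).
Proof. by case: hP => [[h _] _ _ _ _]; exact: h. Qed.
Lemma HR x y z : Zi (B x (y + z) - (B x y + B x z)).
Proof. by case: hP => [[_ h] _ _ _ _]; exact: h. Qed.
Lemma hND x : (forall y, Zi (B x y)) -> x = 0.
Proof.
case: hP => [_ h _ _ _] H; apply: h => y; rewrite /eqQZ subr0; exact: H.
Qed.
Lemma hff : f + f = 0.
Proof. by case: hP => [_ _ _ h _]; rewrite -mulr2n. Qed.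
Lemma hqf : Zi (q f - 1/2).
Proof. by case: hP => [_ _ _ _ h]. Qed.
Lemma hq0 : Zi (q 0).
Proof.
case: hP => [_ _ h _ _]; have := h 0 0; rewrite /eqQZ mulr0z.
by rewrite (_ : (0:int) ^+ 2 = 0) // mulr0z mul0r subr0.
Qed.

Lemma Bff : Zi (B f f).
Proof.
have -> : B f f = (q 0) *+ 2 - 1 - (q f - 1/2) *+ 2.
  by rewrite /bil hff; field.
by rewrite rpredB ?rpredMn ?hq0 ?hqf // rpredB ?rpredMn ?hq0.
Qed.

Lemma dich x : Zi (B x f) \/ Zi (B x f - 1/2).
Proof.
apply: half_int; have := HR x f f; rewrite hff B0 sub0r.
by rewrite rpredN mulr2n.
Qed.

Lemma notG0 x : ~~ Zi (B x f) -> Zi (B x f - 1/2).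
Proof. by case: (dich x) => h; first by rewrite h. Qed.

Lemma fneq0 : f != 0.
Proof.
apply/eqP => hf0; apply: nhalf.
have -> : (1/2 : rat) = q 0 - (q f - 1/2) by rewrite hf0; ring.
by rewrite rpredB ?hq0 ?hqf.
Qed.

Definition phi0f x := if eqQZ (B x f) 0 then x else x + f.

Lemma G0E x : eqQZ (B x f) 0 = Zi (B x f).
Proof. by rewrite /eqQZ subr0. Qed.

Lemma phi0K : involutive phi0f.
Proof.
move=> x; rewrite /phi0f !G0E.
case: (boolP (Zi (B x f))) => hx; first by rewrite hx.
have -> : Zi (B (x + f) f) = false.
  apply/negbTE/negP => h; move/negP: hx; apply.
  have -> : B x f = B (x + f) f - (B (x + f) f - (B x f + B f f)) - B f f by ring.
  have := HL x f f; have := Bff; move=> *; zi.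
by rewrite /= -addrA hff addr0.
Qed.

Definition phi0 : {perm G} := perm (can_inj phi0K).

Lemma phi0E x : phi0 x = phi0f x.
Proof. by rewrite permE. Qed.

Lemma phi0_aut : PSM_aut q f phi0.
Proof.
split.
- move=> x y; rewrite !phi0E /phi0f !G0E.
  have L := HL x y f.
  case: (boolP (Zi (B x f))) => hx; case: (boolP (Zi (B y f))) => hy.
  + have -> : Zi (B (x + y) f) = true; last by [].
    have -> : B (x + y) f = (B (x + y) f - (B x f + B y f)) + B x f + B y f by ring.
    zi.
  + have -> : Zi (B (x + y) f) = false; last by rewrite /= addrA.
    apply/negbTE/negP => h; move/negP: hy; apply.
    have -> : B y f = B (x + y) f - (B (x + y) f - (B x f + B y f)) - B x f by ring.
    zi.
  + have -> : Zi (B (x + y) f) = false; last by rewrite /= addrAC.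
    apply/negbTE/negP => h; move/negP: hx; apply.
    have -> : B x f = B (x + y) f - (B (x + y) f - (B x f + B y f)) - B y f by ring.
    zi.
  + have -> : Zi (B (x + y) f) = true; last by rewrite /= addrACA hff addr0.
    have -> : B (x + y) f = (B (x + y) f - (B x f + B y f)) + (B x f - 1/2)
      + (B y f - 1/2) + 1 by field.
    have := notG0 _ hx; have := notG0 _ hy; move=> *; zi.
- move=> x; rewrite phi0E /phi0f !G0E /eqQZ.
  case: (boolP (Zi (B x f))) => hx /=; first by rewrite subrr rpred0.
  rewrite qadd.
  have -> : q x + q f + B x f - q 0 - q x = (q f - 1/2) + (B x f - 1/2) - q 0 + 1
    by field.
  have := notG0 _ hx; have := hqf; have := hq0; move=> *; zi.
- by rewrite phi0E /phi0f G0E Bff.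
Qed.

Lemma phi0_id : F_is_id q f phi0.
Proof.
move=> x; rewrite /G0 => hx; exists 0; rewrite phi0E /phi0f hx mulr0z.
by rewrite subrr.
Qed.

Lemma exists_a : exists a, ~~ Zi (B a f).
Proof.
have [/existsP[a ha]|/existsPn hall] := boolP [exists a, ~~ Zi (B a f)].
  by exists a.
exfalso; move/eqP: fneq0; apply; apply: hND => y.
by rewrite Bsym; have := hall y; rewrite negbK.
Qed.

Lemma ker_sub (phi : {perm G}) : PSM_aut q f phi -> F_is_id q f phi ->
  phi = 1%g \/ phi = phi0.
Proof.
move=> [hadd hq hf] hid.
have K1 x : Zi (B x f) -> phi x = x.
  move=> hx; have hx' : G0 q f x by rewrite /G0 G0E.
  have [n hn] := hid x hx'.
  have hphi : phi x = x + f *~ n by rewrite -hn addrC subrK.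
  case: (@fint _ f n hff) => hz; first by rewrite hphi hz addr0.
  exfalso; apply: nhalf; have := hq x; rewrite /eqQZ hphi hz qadd => h.
  have -> : (1/2 : rat) = (q x + q f + B x f - q 0 - q x) - (q f - 1/2) - B x f + q 0
    by field.
  have := hqf; have := hq0; move=> *; zi.
have K2 x y : Zi (B x f) -> Zi (B x (phi y - y)).
  move=> hx.
  have e1 : Zi (B x (phi y) - B x y).
    have := hq (x + y); have := hq x; have := hq y.
    rewrite /eqQZ hadd (K1 x hx) => h1 h2 h3.
    have -> : B x (phi y) - B x y = (q (x + phi y) - q (x + y)) - (q (phi y) - q y)
      by rewrite /bil; ring.
    zi.
  have e2 := HR x y (phi y - y).
  have e3 : y + (phi y - y) = phi y by rewrite addrC subrK.
  rewrite e3 in e2.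
  have -> : B x (phi y - y) = (B x (phi y) - B x y) - (B x (phi y) - (B x y + B x (phi y - y)))
    by ring.
  zi.
have [a ha] := exists_a.
have ha' := notG0 _ ha.
have Ga w : ~~ Zi (B w f) -> Zi (B (w - a) f).
  move=> hw; have := notG0 _ hw; have := HL (w - a) a f; rewrite subrK => h1 h2.
  have -> : B (w - a) f = (B w f - 1/2) - (B a f - 1/2) - (B w f - (B (w-a) f + B a f))
    by ring.
  zi.
have phiw w (hw : ~~ Zi (B w f)) : phi w = (w - a) + phi a.
  by rewrite -{1}(K1 (w - a) (Ga w hw)) -hadd subrK.
have haa : Zi (B (a + a) f).
  have := HL a a f => h.
  have -> : B (a + a) f = (B (a + a) f - (B a f + B a f)) + (B a f - 1/2) *+ 2 + 1
    by rewrite mulr2n; field.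
  zi.
have hz2 : Zi (B a (phi a - a) *+ 2).
  have := K2 (a + a) a haa; have := HL a a (phi a - a) => h1 h2.
  have -> : B a (phi a - a) *+ 2 = B (a + a) (phi a - a)
     - (B (a + a) (phi a - a) - (B a (phi a - a) + B a (phi a - a)))
    by rewrite mulr2n; ring.
  zi.
case: (half_int _ hz2) => hc.
- left.
  have z0 : phi a - a = 0.
    apply: hND => w; rewrite Bsym.
    case: (boolP (Zi (B w f))) => hw; first exact: K2.
    have := HL (w - a) a (phi a - a); rewrite subrK => h1.
    have := K2 (w - a) a (Ga w hw) => h2.
    have -> : B w (phi a - a) = (B w (phi a - a) - (B (w - a) (phi a - a) + B a (phi a - a)))
      + B (w - a) (phi a - a) + B a (phi a - a) by ring.
    zi.
  have pa : phi a = a by apply: subr0_eq.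
  apply/permP => w; rewrite perm1.
  case: (boolP (Zi (B w f))) => hw; first exact: K1.
  by rewrite phiw // pa subrK.
- right.
  have zf : phi a - a - f = 0.
    apply: hND => w; rewrite Bsym.
    have := HR w (phi a - a - f) f; rewrite subrK => e.
    case: (boolP (Zi (B w f))) => hw.
      have := K2 w a hw => h.
      have -> : B w (phi a - a - f) = B w (phi a - a) - B w f
        - (B w (phi a - a) - (B w (phi a - a - f) + B w f)) by ring.
      zi.
    have := HL (w - a) a (phi a - a); rewrite subrK => h1.
    have := K2 (w - a) a (Ga w hw) => h2.
    have := notG0 _ hw => h3.
    have -> : B w (phi a - a - f) =
      - (B w (phi a - a) - (B w (phi a - a - f) + B w f))
      + (B w (phi a - a) - (B (w - a) (phi a - a) + B a (phi a - a)))
      + B (w - a) (phi a - a) + (B a (phi a - a) - 1/2) - (B w f - 1/2) by ring.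
    zi.
  have pa : phi a = a + f by rewrite -(subr0_eq zf) addrC subrK.
  apply/permP => w; rewrite phi0E /phi0f G0E.
  case: (boolP (Zi (B w f))) => hw /=; first exact: K1.
  by rewrite phiw // pa addrA subrK.
Qed.

Lemma phi0_sq : (phi0 ^+ 2)%g = 1%g.
Proof. by apply/permP => x; rewrite expgS expg1 permM !phi0E phi0K perm1. Qed.

Lemma o2 : #[phi0]%g = 2.
Proof.
have d : (#[phi0]%g %| 2)%N by rewrite order_dvdn phi0_sq.
have n1 : #[phi0]%g != 1%N.
  rewrite order_eq1; have [a ha] := exists_a; apply/eqP => h.
  have := congr1 (fun p : {perm G} => p a) h; rewrite /= perm1 phi0E /phi0f G0E.
  rewrite (negbTE ha) => e.
  have : a + f = a + 0 by rewrite addr0.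
  by move/addrI => /eqP; rewrite (negbTE fneq0).
have p := order_gt0 phi0; have := dvdn_leq (isT : (0 < 2)%N) d; lia.
Qed.

Lemma kerF_eq : kerF q f = <[phi0]>%g.
Proof.
apply/setP => p; rewrite inE; apply/asboolP/idP.
- move=> [h1 h2]; case: (ker_sub _ h1 h2) => ->; [exact: group1 | exact: cycle_id].
- move=> hp; have [i hi ->] := cyclePmin hp; rewrite o2 in hi.
  case: i hi => [|[|//]] _; rewrite ?expg0 ?expg1.
  + split; first split.
    * by move=> x y; rewrite !perm1.
    * by move=> x; rewrite perm1 /eqQZ subrr rpred0.
    * by rewrite perm1.
    * by move=> x _; exists 0; rewrite perm1 subrr mulr0z.
  + split; [exact: phi0_aut | exact: phi0_id].
Qed.

End Main.

Theorem mainTheorem7 (G : finZmodType) (q : G -> rat) (f : G) :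
  PSM_object q f -> (kerF q f \isog [set: 'Z_2])%g.
Proof.
move=> hP; rewrite (@kerF_eq _ _ _ hP) isog_sym.
have := Zp_isog (@phi0 _ _ _ hP); rewrite (@o2 _ _ _ hP) /Zp /=.
by [].
Qed.
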